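(* Let $P=(X,\prec)$ be a finite twin-free interval order containing no induced subposet isomorphic to any of $\mathbf{4}+\mathbf{1}$, $\mathbf{3}+\mathbf{1}+\mathbf{1}$, $Z$, $D$, $Y$, or the dual of $Y$, and let $\mathcal I=\{I(z)=[L(z),R(z)]:z\in X\}$ be a closed interval representation of $P$ such that (1) no interval strictly contains two other intervals, (2) no interval is strictly contained in two other intervals, and (3) whenever $I(u)\subsetneq I(v)$ there are unique $x,y\in X$ with $x$ peeking into $vu$ from the left and $y$ peeking into $vu$ from the right. Fix a proper inclusion $I(u)\subsetneq I(v)$ with left peeker $x$ and right peeker $y$, and replace $I(x)$ by $[L(x),L(v)]$ and $I(y)$ by $[R(v),R(y)]$, leaving all other intervals unchanged. Then the resulting set of closed intervals is again a closed interval representation of $P$, it again satisfies (1), (2), (3), and it has the same proper inclusions as $\mathcal I$ (that is, for all $a,b\in X$ the new interval of $a$ is properly contained in the new interval of $b$ if and only if $I(a)\subsetneq I(b)$).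
   Context: Posets are strict (irreflexive) partial orders; twins are points with exactly the same comparabilities; twin-free means no two distinct twins. A closed interval representation of $P$ assigns a closed real interval $[L(x),R(x)]$ to each $x$ with $x\prec y$ iff $R(x)<L(y)$; $P$ is an interval order if one exists. $I(u)$ is strictly contained in $I(v)$ if $I(u)\subset I(v)$ and they do not have identical endpoints. For $I(u)\subsetneq I(v)$: $x$ peeks into $vu$ if $I(x)$ meets $I(v)$ but not $I(u)$; from the left if moreover $R(x)\le L(u)$; from the right if moreover $R(u)\le L(x)$. Forbidden posets (unlisted, non-transitively-implied pairs incomparable): $\mathbf{4}+\mathbf{1}$: $a\prec b\prec c\prec d$ plus isolated $x$. $\mathbf{3}+\mathbf{1}+\mathbf{1}$: $a\prec b\prec c$ plus isolated $x,y$. $Z$: $a,b,c,d,x,y$ with $a\prec b\prec c\prec d$, $x\prec d$, $a\prec y$. $D$: $a,b,c,d,x$ with $a\prec b\prec d$, $a\prec c\prec d$. $Y$: $a,b,c,d,x$ with $a\prec d\prec b$, $a\prec d\prec c$. The dual reverses all comparabilities. *)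

(* Defs.v *)
From HB Require Import structures.
From mathcomp Require Import all_boot all_order all_algebra.
From mathcomp Require Import reals.
Set Implicit Arguments. Unset Strict Implicit. Unset Printing Implicit Defensive.
Import Order.TTheory GRing.Theory Num.Theory.
Local Open Scope ring_scope.

Definition strict_poset (T : finType) (lt : rel T) : Prop :=
  irreflexive lt /\ transitive lt.

Definition twins (T : finType) (lt : rel T) (a b : T) : Prop :=
  forall z, (lt z a = lt z b) /\ (lt a z = lt b z).

Definition twin_free (T : finType) (lt : rel T) : Prop :=
  forall a b, twins lt a b -> a = b.

(** A small poset on 'I_k given by the list of ALL its comparable pairs
    (already transitively closed). *)
Definition rel_of (k : nat) (s : seq (nat * nat)) : rel 'I_k :=
  fun i j => (nat_of_ord i, nat_of_ord j) \in s.

Definition dual_rel (k : nat) (r : rel 'I_k) : rel 'I_k := fun i j => r j i.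

Definition contains_induced (T : finType) (lt : rel T) (k : nat) (r : rel 'I_k)
  : Prop :=
  exists f : 'I_k -> T, injective f /\ forall i j, lt (f i) (f j) = r i j.

(** 4+1 : a=0<b=1<c=2<d=3, x=4 isolated. *)
Definition four_plus_one : rel 'I_5 :=
  @rel_of 5 [:: (0,1); (0,2); (0,3); (1,2); (1,3); (2,3)]%N.
(** 3+1+1 : a=0<b=1<c=2, x=3, y=4 isolated. *)
Definition three_one_one : rel 'I_5 :=
  @rel_of 5 [:: (0,1); (0,2); (1,2)]%N.
(** Z : a=0<b=1<c=2<d=3, x=4<d, a<y=5. *)
Definition posetZ : rel 'I_6 :=
  @rel_of 6 [:: (0,1); (0,2); (0,3); (1,2); (1,3); (2,3); (4,3); (0,5)]%N.
(** D : a=0<b=1<d=3, a<c=2<d, x=4 isolated. *)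
Definition posetD : rel 'I_5 :=
  @rel_of 5 [:: (0,1); (0,2); (0,3); (1,3); (2,3)]%N.
(** Y : a=0<d=3<b=1, a<d<c=2, x=4 isolated. *)
Definition posetY : rel 'I_5 :=
  @rel_of 5 [:: (0,3); (3,1); (3,2); (0,1); (0,2)]%N.

Definition forbidden_free (T : finType) (lt : rel T) : Prop :=
  ~ contains_induced lt four_plus_one /\
  ~ contains_induced lt three_one_one /\
  ~ contains_induced lt posetZ /\
  ~ contains_induced lt posetD /\
  ~ contains_induced lt posetY /\
  ~ contains_induced lt (dual_rel posetY).

Section Intervals.
Variables (R : realType) (T : finType).

Definition closed_rep (lt : rel T) (L Rt : T -> R) : Prop :=
  (forall z, L z <= Rt z) /\ (forall a b, lt a b = (Rt a < L b)).

Definition interval_order (lt : rel T) : Prop :=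
  exists L Rt : T -> R, closed_rep lt L Rt.

Definition scont (L Rt : T -> R) (u v : T) : Prop :=
  (L v <= L u /\ Rt u <= Rt v) /\ ~ (L u = L v /\ Rt u = Rt v).

Definition meets (L Rt : T -> R) (a b : T) : Prop :=
  L a <= Rt b /\ L b <= Rt a.

Definition peeks (L Rt : T -> R) (v u x : T) : Prop :=
  meets L Rt x v /\ ~ meets L Rt x u.
Definition peeks_left (L Rt : T -> R) (v u x : T) : Prop :=
  peeks L Rt v u x /\ Rt x <= L u.
Definition peeks_right (L Rt : T -> R) (v u x : T) : Prop :=
  peeks L Rt v u x /\ Rt u <= L x.

Definition cond1 (L Rt : T -> R) : Prop :=
  ~ exists v a b, a <> b /\ scont L Rt a v /\ scont L Rt b v.
Definition cond2 (L Rt : T -> R) : Prop :=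
  ~ exists u a b, a <> b /\ scont L Rt u a /\ scont L Rt u b.
Definition cond3 (L Rt : T -> R) : Prop :=
  forall u v, scont L Rt u v ->
    (exists! x, peeks_left L Rt v u x) /\ (exists! y, peeks_right L Rt v u y).

Definition good_rep (L Rt : T -> R) : Prop :=
  cond1 L Rt /\ cond2 L Rt /\ cond3 L Rt.

Definition newL (L Rt : T -> R) (v y : T) : T -> R :=
  fun z => if z == y then Rt v else L z.
Definition newR (L Rt : T -> R) (v x : T) : T -> R :=
  fun z => if z == x then L v else Rt z.

End Intervals.

(* Main.v *)
Require Import Defs.
From HB Require Import structures.
From mathcomp Require Import all_boot all_order all_algebra.
From mathcomp Require Import reals.
From mathcomp Require Import lra.
Import Order.TTheory GRing.Theory Num.Theory.
Local Open Scope ring_scope.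

Lemma meets_lt (R : realType) (T : finType) (lt : rel T) (L Rt : T -> R) a b :
  closed_rep lt L Rt -> (meets L Rt a b <-> (~~ lt b a /\ ~~ lt a b)).
Proof. by case=> _ h; rewrite /meets !h -!leNgt. Qed.

Lemma pl_lt (R : realType) (T : finType) (lt : rel T) (L Rt : T -> R) v u z :
  closed_rep lt L Rt ->
  (peeks_left L Rt v u z <-> meets L Rt z v /\ ~ meets L Rt z u /\ lt z u).
Proof.
case=> hLR h; rewrite /peeks_left /peeks h; split.
- case=> [[m nm] hz]; split => //; split => //.
  rewrite ltNge; apply/negP => h2; apply: nm.
  have := hLR z; have := hLR u; split; lra.
- by case=> m [nm hz]; split => //; exact: ltW.
Qed.

Lemma pr_lt (R : realType) (T : finType) (lt : rel T) (L Rt : T -> R) v u z :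
  closed_rep lt L Rt ->
  (peeks_right L Rt v u z <-> meets L Rt z v /\ ~ meets L Rt z u /\ lt u z).
Proof.
case=> hLR h; rewrite /peeks_right /peeks h; split.
- case=> [[m nm] hz]; split => //; split => //.
  rewrite ltNge; apply/negP => h2; apply: nm.
  have := hLR z; have := hLR u; split; lra.
- by case=> m [nm hz]; split => //; exact: ltW.
Qed.

Ltac fin1 := let h := fresh "h" in intros [[? ?] h];
       (split; [split; lra | intros [? ?]; apply h; split; lra]).
Ltac fin := split; fin1.

Theorem proposition14 (R : realType) (T : finType) (lt : rel T)
  (L Rt : T -> R) (u v x y : T) :
  strict_poset lt ->
  twin_free lt ->
  interval_order R lt ->
  forbidden_free lt ->
  closed_rep lt L Rt ->
  good_rep L Rt ->
  scont L Rt u v ->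
  peeks_left L Rt v u x ->
  peeks_right L Rt v u y ->
  let L' := newL L Rt v y in
  let R' := newR L Rt v x in
  closed_rep lt L' R' /\ good_rep L' R' /\
  (forall a b, scont L' R' a b <-> scont L Rt a b).
Proof.
move=> _ _ _ _ hrep [c1 [c2 c3]] huv hx hy L' R'.
have [hLR hlt] := hrep.
have huv0 := huv.
case: huv => [[Lvu Ruv] nuv].
case: hx => [[[mx1 mx2] nmx] Rxu].
case: hy => [[[my1 my2] nmy] Ruy].
have Lu := hLR u; have Lv := hLR v; have Lx := hLR x; have Ly := hLR y.
have Rxu' : Rt x < L u.
  by rewrite ltNge; apply/negP => h; apply: nmx; split; lra.
have Ruy' : Rt u < L y.
  by rewrite ltNge; apply/negP => h; apply: nmy; split; lra.
have Lvv : L v < Rt v.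
  by rewrite ltNge; apply/negP => h; apply: nuv; split; lra.
have nxy : x <> y by move=> e; rewrite e in Rxu'; lra.
have Ax : forall a, L a <= Rt v -> L v <= Rt a -> Rt a < L u -> a = x.
  move=> a h1 h2 h3.
  have [[x0 [_ hx0]] _] := c3 u v huv0.
  have e1 : x0 = a.
    apply: hx0; split; [split; [split => //| by move=> [_ h]; lra] | lra].
  have e2 : x0 = x.
    apply: hx0; split; [split; [split => //| by move=> [_ h]; lra] | lra].
  by rewrite -e1 e2.
have Ay : forall a, L a <= Rt v -> L v <= Rt a -> Rt u < L a -> a = y.
  move=> a h1 h2 h3.
  have [_ [y0 [_ hy0]]] := c3 u v huv0.
  have e1 : y0 = a.
    apply: hy0; split; [split; [split => //| by move=> [h _]; lra] | lra].
  have e2 : y0 = y.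
    apply: hy0; split; [split; [split => //| by move=> [h _]; lra] | lra].
  by rewrite -e1 e2.
have Ax' : forall b, b <> x -> (Rt b < L v) \/ (Rt v < L b) \/ (L u <= Rt b).
  move=> b nb; case: (ltP (Rt b) (L v)) => h1; first by left.
  case: (ltP (Rt v) (L b)) => h2; first by right; left.
  case: (leP (L u) (Rt b)) => h3; first by right; right.
  by case: nb; apply: Ax.
have Ay' : forall b, b <> y -> (Rt b < L v) \/ (Rt v < L b) \/ (L b <= Rt u).
  move=> b nb; case: (ltP (Rt b) (L v)) => h1; first by left.
  case: (ltP (Rt v) (L b)) => h2; first by right; left.
  case: (leP (L b) (Rt u)) => h3; first by right; right.
  by case: nb; apply: Ay.
have Lxv : L x < L v.
  rewrite ltNge; apply/negP => h; apply: c1; exists v, x, u; split.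
    by move=> e; rewrite e in Rxu'; lra.
  split => //; split; [split; lra | move=> [_ e]; lra].
have Ryv : Rt v < Rt y.
  rewrite ltNge; apply/negP => h; apply: c1; exists v, y, u; split.
    by move=> e; rewrite e in Ruy'; lra.
  split => //; split; [split; lra | move=> [e _]; lra].
have hC : forall b, L v < L b -> L b <= Rt x -> False.
  move=> b h1 h2; have Lb := hLR b; case: (leP (Rt b) (Rt v)) => hb.
    apply: c1; exists v, b, u; split.
      by move=> e; rewrite e in h2; lra.
    split => //; split; [split; lra | move=> [e _]; lra].
  apply: c2; exists u, v, b; split.
    by move=> e; rewrite e in hb; lra.
  split => //; split; [split; lra | move=> [e _]; lra].
have hC' : forall a, L y <= Rt a -> Rt a < Rt v -> False.
  move=> a h1 h2; have La := hLR a; case: (leP (L v) (L a)) => hb.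
    apply: c1; exists v, a, u; split.
      by move=> e; rewrite e in h1; lra.
    split => //; split; [split; lra | move=> [_ e]; lra].
  apply: c2; exists u, v, a; split.
    by move=> e; rewrite e in hb; lra.
  split => //; split; [split; lra | move=> [e _]; lra].
have hrep' : closed_rep lt L' R'.
  split.
    move=> z; unfold L', R', newL, newR.
    case: (z =P y) => [zy|nzy]; case: (z =P x) => [zx|nzx] => /=.
    - by exfalso; apply: nxy; congruence.
    - rewrite zy; lra.
    - rewrite zx; lra.
    - exact: hLR.
  move=> a b; rewrite hlt; unfold L', R', newL, newR.
  case: (a =P x) => [ax|nax]; case: (b =P y) => [bY|nbY] => /=.
  - by rewrite ax bY; apply/idP/idP => _; lra.
  - rewrite ax; apply/idP/idP => h; first lra.
    by rewrite ltNge; apply/negP => h'; exact: hC b h h'.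
  - rewrite bY; apply/idP/idP => h; first lra.
    by rewrite ltNge; apply/negP => h'; exact: hC' a h' h.
  - by [].
have hsc : forall a b, scont L' R' a b <-> scont L Rt a b.
  move=> a b; have La := hLR a; have Lb := hLR b.
  clear hrep hlt c1 c2 c3 huv0 nuv Rxu Ruy nmx nmy Ax Ay hC hC' hrep'.
  unfold scont, L', R', newL, newR.
  case: (a =P x) => [ax|nax]; case: (a =P y) => [ay|nay];
  case: (b =P x) => [bx|nbx]; case: (b =P y) => [bY|nbY] => /=;
  try (by (exfalso; apply: nxy; congruence)).
  - subst; fin.
  - subst; fin.
  - move: (Ax' _ nbx) => D; subst; case: D => [D|[D|D]]; fin.
  - subst; fin.
  - subst; fin.
  - move: (Ay' _ nbY) => D; subst; case: D => [D|[D|D]]; fin.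
  - move: (Ax' _ nax) => D; subst; case: D => [D|[D|D]]; fin.
  - move: (Ay' _ nay) => D; subst; case: D => [D|[D|D]]; fin.
  - exact: iff_refl.
have hml : forall a b, meets L' R' a b <-> meets L Rt a b.
  by move=> a b; rewrite (@meets_lt _ _ _ _ _ a b hrep') (@meets_lt _ _ _ _ _ a b hrep).
have hpl : forall v0 u0 z, peeks_left L' R' v0 u0 z <-> peeks_left L Rt v0 u0 z.
  by move=> v0 u0 z; rewrite (@pl_lt _ _ _ _ _ v0 u0 z hrep') (@pl_lt _ _ _ _ _ v0 u0 z hrep) !hml.
have hpr : forall v0 u0 z, peeks_right L' R' v0 u0 z <-> peeks_right L Rt v0 u0 z.
  by move=> v0 u0 z; rewrite (@pr_lt _ _ _ _ _ v0 u0 z hrep') (@pr_lt _ _ _ _ _ v0 u0 z hrep) !hml.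
split => //; split => //; split; [|split].
- move=> [w [a [b [nab [h1 h2]]]]]; apply: c1; exists w, a, b.
  by split => //; split; apply/hsc.
- move=> [w [a [b [nab [h1 h2]]]]]; apply: c2; exists w, a, b.
  by split => //; split; apply/hsc.
- move=> u0 v0 /hsc h.
  have [[x0 [p0 uq0]] [y0 [q0 uq1]]] := c3 _ _ h.
  split.
    exists x0; split; first exact/hpl.
    by move=> z /hpl; apply: uq0.
  exists y0; split; first exact/hpr.
  by move=> z /hpr; apply: uq1.
Qed.
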